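(* Let $Z,W,Y$ be Hilbert spaces. Assume: $A$ (resp. $E$) is a closed densely defined operator on $Z$ (resp. $W$); $C:D(A)\to Y$ and $F:Y\to D(E^* )'$ are bounded; $A$ and $E$ are diagonalizable in Riesz bases $(z_j)_{j\ge1}$ of $Z$ and $(w_k)_{k\ge1}$ of $W$ with $Az_j=\lambda_jz_j$, $Ew_k=\mu_kw_k$; and $A$ and $E$ share no eigenvalue. Let $\mathcal{A}$ be the operator on $\mathcal{X}=Z\times W$ given by $\mathcal{A}(z,w)=(Az,\ FCz+E_{-1}w)$ on $D(\mathcal{A})=\{(z,w)\in D(A)\times W: E_{-1}w+FCz\in W\}$, whose eigenvectors are $\mathbf{Z}_k=(0,w_k)$ and $\mathbf{Z}_j=(z_j,(\lambda_j-E)^{-1}FCz_j)$. If $$\sum_j\|(\lambda_j-E)^{-1}FCz_j\|_W^2<\infty,$$ then the normalized eigenvectors $\{\mathbf{Z}_j/\|\mathbf{Z}_j\|_{\mathcal{X}}\}_j\cup\{\mathbf{Z}_k/\|\mathbf{Z}_k\|_{\mathcal{X}}\}_k$ form a Riesz basis of $\mathcal{X}$.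
   Context: $D(E^* )'$ denotes the dual of $D(E^* )$ with pivot $W$, $E_{-1}:W\to D(E^* )'$ the unique continuous extension of $E$, and $(\lambda_j-E)^{-1}$ is understood as the resolvent extended to $D(E^* )'\to W$. *)

(* Defs.v *)
From HB Require Import structures.
From mathcomp Require Import all_boot all_order all_algebra.
From mathcomp Require Import complex.
From mathcomp Require Import reals.
Set Implicit Arguments. Unset Strict Implicit. Unset Printing Implicit Defensive.
Import Order.TTheory GRing.Theory Num.Theory.
Local Open Scope ring_scope.
Local Open Scope complex_scope.

Section Hilbert.
Variables (R : rcfType) (V : lmodType R[i]) (ip : V -> V -> R[i]).

Definition is_inner_product : Prop :=
  [/\ (forall (a : R[i]) (x y z : V), ip (a *: x + y) z = a * ip x z + ip y z),
      (forall x y : V, ip y x = conjc (ip x y)),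
      (forall x : V, 0 <= ip x x) &
      (forall x : V, ip x x = 0 -> x = 0)].

Definition hnorm (x : V) : R := Num.sqrt (@complex.Re R (ip x x)).

Definition tendsto (u : nat -> V) (x : V) : Prop :=
  forall e : R, 0 < e -> exists N : nat, forall n, (N <= n)%N -> hnorm (u n - x) < e.

Definition cauchy_seq (u : nat -> V) : Prop :=
  forall e : R, 0 < e -> exists N : nat, forall n m, (N <= n)%N -> (N <= m)%N ->
    hnorm (u n - u m) < e.

Definition hilbert : Prop :=
  is_inner_product /\ forall u, cauchy_seq u -> exists x, tendsto u x.

Definition dense (S : V -> Prop) : Prop :=
  forall x, exists u : nat -> V, (forall n, S (u n)) /\ tendsto u x.

Definition linear_on (D : V -> Prop) (T : V -> V) : Prop :=
  D 0 /\ forall (a : R[i]) x y, D x -> D y ->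
    D (a *: x + y) /\ T (a *: x + y) = a *: T x + T y.

Definition closed_densely_defined (D : V -> Prop) (T : V -> V) : Prop :=
  [/\ linear_on D T, dense D &
      forall (u : nat -> V) x y, (forall n, D (u n)) -> tendsto u x ->
        tendsto (fun n => T (u n)) y -> D x /\ T x = y].

Definition is_adjoint (D : V -> Prop) (T : V -> V) (Ds : V -> Prop) (Ts : V -> V)
  : Prop :=
  (forall phi, Ds phi <-> exists psi, forall w, D w -> ip (T w) phi = ip w psi) /\
  (forall phi w, Ds phi -> D w -> ip (T w) phi = ip w (Ts phi)).

Definition op_eigenvalue (D : V -> Prop) (T : V -> V) (l : R[i]) : Prop :=
  exists x, [/\ x <> 0, D x & T x = l *: x].

Definition orthonormal_basis (I : Type) (e : I -> V) : Prop :=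
  (forall i, ip (e i) (e i) = 1) /\ (forall i j, i <> j -> ip (e i) (e j) = 0) /\
  (forall x, (forall i, ip x (e i) = 0) -> x = 0).

Definition bounded_linear_endo (T : V -> V) : Prop :=
  (forall (a : R[i]) x y, T (a *: x + y) = a *: T x + T y) /\
  exists M : R, forall x, hnorm (T x) <= M * hnorm x.

(* Riesz basis: image of an orthonormal basis under a bounded bijective
   linear operator (its inverse is then bounded by the open mapping thm). *)
Definition riesz_basis (I : Type) (x : I -> V) : Prop :=
  exists (e : I -> V) (T : V -> V),
    [/\ orthonormal_basis e, bounded_linear_endo T, bijective T &
        forall i, x i = T (e i)].

Definition normalize (x : V) : V := ((hnorm x)^-1)%:C *: x.
End Hilbert.

Definition bounded_on_domain (R : rcfType) (Z Y : lmodType R[i])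
  (ipZ : Z -> Z -> R[i]) (ipY : Y -> Y -> R[i]) (DA : Z -> Prop) (A : Z -> Z)
  (C : Z -> Y) : Prop :=
  (forall (a : R[i]) x y, DA x -> DA y -> C (a *: x + y) = a *: C x + C y) /\
  exists M : R, forall x, DA x ->
    hnorm ipY (C x) <= M * (hnorm ipZ x + hnorm ipZ (A x)).

(* D(Eadj)' = space of continuous antilinear functionals on D(Eadj) (graph norm
   of Eadj ), with pivot W: w in W is identified with phi |-> <w, phi>.
   F : Y -> D(Eadj)' is represented by F : Y -> W -> R[i], where only the
   values F y phi for phi in D(Eadj) matter; F bounded linear. *)
Definition bounded_into_extrapolation (R : rcfType) (Y W : lmodType R[i])
  (ipY : Y -> Y -> R[i]) (ipW : W -> W -> R[i]) (DEs : W -> Prop) (Es : W -> W)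
  (F : Y -> W -> R[i]) : Prop :=
  [/\ (forall (a : R[i]) y y' phi, DEs phi -> F (a *: y + y') phi = a * F y phi + F y' phi),
      (forall (a : R[i]) y phi psi, DEs phi -> DEs psi ->
          F y (a *: phi + psi) = conjc a * F y phi + F y psi) &
      exists M : R, forall y phi, DEs phi ->
        `|F y phi| <= (M * hnorm ipY y * (hnorm ipW phi + hnorm ipW (Es phi)))%:C].

(* E_{-1} w = (phi |-> <w, Eadj phi>) in D(Eadj)'.  [is_ext_resolvent l f v] says
   v in W solves (l - E_{-1}) v = f in D(Eadj)', i.e. v = (l - E)^{-1} f. *)
Definition is_ext_resolvent (R : rcfType) (W : lmodType R[i])
  (ipW : W -> W -> R[i]) (DEs : W -> Prop) (Es : W -> W)
  (l : R[i]) (f : W -> R[i]) (v : W) : Prop :=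
  forall phi, DEs phi -> l * ipW v phi - ipW v (Es phi) = f phi.

Definition prod_ip (R : rcfType) (Z W : lmodType R[i])
  (ipZ : Z -> Z -> R[i]) (ipW : W -> W -> R[i]) (x y : (Z * W)%type) : R[i] :=
  ipZ x.1 y.1 + ipW x.2 y.2.

(* Main.v *)
Require Import Defs.
From HB Require Import structures.
From mathcomp Require Import all_boot all_order all_algebra.
From mathcomp Require Import complex.
From mathcomp Require Import reals.
From mathcomp Require Import ring lra.
From Stdlib Require Import Classical ClassicalEpsilon FunctionalExtensionality.
Import Order.TTheory GRing.Theory Num.Theory.
Local Open Scope ring_scope.
Local Open Scope complex_scope.
Set Implicit Arguments. Unset Strict Implicit. Unset Printing Implicit Defensive.
Local Notation Re := (@complex.Re _).
Local Notation Im := (@complex.Im _).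

Module P1.
Definition sqc (R : rcfType) (c : R[i]) : R := Re c ^+ 2 + Im c ^+ 2.

Section Basic.
Variables (R : realType) (V : lmodType R[i]) (ip : V -> V -> R[i]).
Hypothesis hip : is_inner_product ip.

Lemma ip_lin a x y z : ip (a *: x + y) z = a * ip x z + ip y z.
Proof. by case: hip. Qed.
Lemma ip_sym x y : ip y x = conjc (ip x y).
Proof. by case: hip. Qed.
Lemma ip_ge0 x : 0 <= ip x x.
Proof. by case: hip. Qed.
Lemma ip_eq0 x : ip x x = 0 -> x = 0.
Proof. by case: hip => _ _ _; apply. Qed.

Lemma ip0l z : ip 0 z = 0.
Proof.
have := ip_lin 1 0 0 z; rewrite scaler0 addr0 mul1r => h.
by apply: (@addrI _ (ip 0 z)); rewrite addr0 -h.
Qed.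
Lemma ipDl x y z : ip (x + y) z = ip x z + ip y z.
Proof. by rewrite -[x in LHS]scale1r ip_lin mul1r. Qed.
Lemma ipZl a x z : ip (a *: x) z = a * ip x z.
Proof. by rewrite -[a *: x]addr0 ip_lin ip0l addr0. Qed.
Lemma ipNl x z : ip (- x) z = - ip x z.
Proof. by rewrite -scaleN1r ipZl mulN1r. Qed.
Lemma ipBl x y z : ip (x - y) z = ip x z - ip y z.
Proof. by rewrite ipDl ipNl. Qed.
Lemma ip0r z : ip z 0 = 0.
Proof. by rewrite ip_sym ip0l conjc0. Qed.
Lemma ipDr x y z : ip z (x + y) = ip z x + ip z y.
Proof. by rewrite ip_sym ipDl rmorphD /= -!ip_sym. Qed.
Lemma ipZr a x z : ip z (a *: x) = conjc a * ip z x.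
Proof. by rewrite ip_sym ipZl rmorphM /= -ip_sym. Qed.
Lemma ipNr x z : ip z (- x) = - ip z x.
Proof. by rewrite ip_sym ipNl rmorphN /= -ip_sym. Qed.
Lemma ipBr x y z : ip z (x - y) = ip z x - ip z y.
Proof. by rewrite ipDr ipNr. Qed.

Definition N2 x := Re (ip x x).
Lemma ipxx x : ip x x = (N2 x)%:C.
Proof.
have := ip_ge0 x; rewrite /N2; case: (ip x x) => a b.
rewrite lecE /= => /andP[/eqP h _].
by rewrite h.
Qed.
Lemma N2_ge0 x : 0 <= N2 x.
Proof. by have := ip_ge0 x; rewrite ipxx lecR. Qed.
Lemma N2_eq0 x : N2 x = 0 -> x = 0.
Proof. by move=> h; apply: ip_eq0; rewrite ipxx h. Qed.

Lemma Re_conj (c : R[i]) : Re (conjc c) = Re c.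
Proof. by case: c. Qed.
Lemma Im_conj (c : R[i]) : Im (conjc c) = - Im c.
Proof. by case: c. Qed.

Lemma N2D x y : N2 (x + y) = N2 x + N2 y + 2 * Re (ip x y).
Proof.
rewrite /N2 ipDl !ipDr (ip_sym x y).
case: (ip x y) => a b /=; case: (ip x x) => ? ?; case: (ip y y) => ? ? /=.
by rewrite /=; lra.
Qed.
Lemma N2Z a x : N2 (a *: x) = sqc a * N2 x.
Proof.
rewrite /N2 ipZl ipZr ipxx /sqc; case: a => a b /=.
ring.
Qed.
Lemma N2N x : N2 (- x) = N2 x.
Proof. by rewrite /N2 ipNl ipNr opprK. Qed.

Lemma sqc_ge0 (c : R[i]) : 0 <= sqc c.
Proof. by rewrite /sqc addr_ge0 // sqr_ge0. Qed.

Lemma sqc_real (t : R) : sqc t%:C = t ^+ 2.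
Proof. by rewrite /sqc /= expr0n /= addr0. Qed.
Lemma Re_conjRM (t : R) (c : R[i]) : Re (conjc t%:C * c) = t * Re c.
Proof. by case: c => a b /=; rewrite oppr0 !mul0r subr0. Qed.

Lemma CS_Re x y : Re (ip x y) ^+ 2 <= N2 x * N2 y.
Proof.
have [y0|ny] := eqVneq (N2 y) 0.
  by rewrite y0 mulr0 (N2_eq0 y0) ip0r expr0n.
have hy : 0 < N2 y by rewrite lt_def ny N2_ge0.
have := N2_ge0 (x + (- (Re (ip x y) / N2 y))%:C *: y).
rewrite N2D N2Z ipZr sqc_real Re_conjRM.
set r := Re (ip x y); set n := N2 y; set m := N2 x => h.
have e1 : (- (r / n)) ^+ 2 * n = r^+2 / n by field; lra.
have e2 : 2 * (- (r / n) * r) = - 2 * (r^+2/n) by field; lra.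
rewrite e1 e2 in h.
have : 0 <= m - r^+2 / n by lra.
by rewrite subr_ge0 ler_pdivrMr // mulrC.
Qed.

Definition hn x := Num.sqrt (N2 x).
Lemma hnE x : hnorm ip x = hn x. Proof. by []. Qed.
Lemma hn_ge0 x : 0 <= hn x. Proof. exact: sqrtr_ge0. Qed.
Lemma hn_sqr x : hn x ^+ 2 = N2 x. Proof. by rewrite sqr_sqrtr // N2_ge0. Qed.
Lemma hn_eq0 x : hn x = 0 -> x = 0.
Proof. by move=> h; apply: N2_eq0; rewrite -hn_sqr h expr0n. Qed.
Lemma hn0 : hn 0 = 0.
Proof. by rewrite /hn /N2 ip0l /= sqrtr0. Qed.

Lemma Re_le_hn x y : Re (ip x y) <= hn x * hn y.
Proof.
have := CS_Re x y; rewrite -!hn_sqr -exprMn => h.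
have := ler_norm (Re (ip x y)); move/le_trans; apply.
by rewrite -(ler_pXn2r (_ : 0 < 2)%N) ?nnegrE ?mulr_ge0 ?hn_ge0 // real_normK ?num_real.
Qed.

Lemma hnD x y : hn (x + y) <= hn x + hn y.
Proof.
rewrite -(ler_pXn2r (_ : 0 < 2)%N) ?nnegrE ?addr_ge0 ?hn_ge0 //.
rewrite hn_sqr N2D -!hn_sqr; have := Re_le_hn x y; nra.
Qed.
Lemma hnN x : hn (- x) = hn x. Proof. by rewrite /hn N2N. Qed.
Lemma hnB x y : hn (x - y) <= hn x + hn y.
Proof. by rewrite -(hnN y); apply: hnD. Qed.
Lemma hn_sym x y : hn (x - y) = hn (y - x).
Proof. by rewrite -hnN opprB. Qed.
Lemma hnZ a x : hn (a *: x) = Num.sqrt (sqc a) * hn x.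
Proof. by rewrite /hn N2Z sqrtrM // sqc_ge0. Qed.
Lemma hn_tri x y zz : hn (x - zz) <= hn (x - y) + hn (y - zz).
Proof. by have := hnD (x - y) (y - zz); rewrite addrA subrK. Qed.

Lemma sqc_conj (c : R[i]) : sqc (conjc c) = sqc c.
Proof. by rewrite /sqc Re_conj Im_conj sqrrN. Qed.

Lemma CS x y : sqc (ip x y) <= N2 x * N2 y.
Proof.
set c := ip x y.
have := CS_Re x (c *: y); rewrite ipZr N2Z -/c.
have -> : Re (conjc c * c) = sqc c by rewrite /sqc; case: (c) => a b /=; lra.
have [c0|cn] := eqVneq (sqc c) 0; first by rewrite c0 mulr_ge0 // N2_ge0.
have hc : 0 < sqc c by rewrite lt_def cn sqc_ge0.
move=> h; have : sqc c * sqc c <= sqc c * (N2 x * N2 y) by rewrite expr2 in h; lra.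
by rewrite ler_pM2l.
Qed.

End Basic.

End P1.
Import P1.


Lemma tail_small (R : realType) (f : nat -> R) (M : R) :
  (forall j, 0 <= f j) -> (forall n, \sum_(0 <= j < n) f j <= M) ->
  forall e, 0 < e -> exists N, forall n m, (N <= n)%N -> \sum_(n <= j < m) f j < e.
Proof.
move=> f0 fM e e0.
pose S : R -> Prop := fun x => exists n, x = \sum_(0 <= j < n) f j.
have hS : classical_sets.has_sup S.
  split; first by exists (\sum_(0 <= j < 0) f j); exists 0%N.
  by exists M => x [n ->].
have [x [N ->] hN] := sup_adherent e0 hS.
exists N => n m hn.
have [hm|hm] := leqP m n.
  by rewrite big_geq.
have ub : \sum_(0 <= j < m) f j <= sup S by apply: sup_upper_bound => //; exists m.
have split1 : \sum_(0 <= j < m) f j = \sum_(0 <= j < N) f j + \sum_(N <= j < n) f j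
    + \sum_(n <= j < m) f j.
  by rewrite -!big_cat_nat //= ?(leq_trans hn) // ltnW.
have : 0 <= \sum_(N <= j < n) f j by apply: sumr_ge0 => *.
lra.
Qed.

Section Lim.
Variables (R : realType) (V : lmodType R[i]) (ip : V -> V -> R[i]).
Hypothesis hV : hilbert ip.
Let hip : is_inner_product ip := proj1 hV.
Local Notation hn := (hn ip).
Local Notation N2 := (N2 ip).

Definition lim (u : nat -> V) : V := epsilon (inhabits 0) (tendsto ip u).

Lemma lim_spec u : (exists x, tendsto ip u x) -> tendsto ip u (lim u).
Proof. exact: epsilon_spec. Qed.

Lemma tendsto_unique u x y : tendsto ip u x -> tendsto ip u y -> x = y.
Proof.
move=> hx hy; apply/eqP; rewrite -subr_eq0; apply/eqP; apply: (hn_eq0 hip).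
apply/eqP; rewrite eq_le hn_ge0 andbT.
apply/ler_addgt0Pr => e e0; rewrite add0r.
have e2 : 0 < e / 2 by rewrite divr_gt0.
have [N1 h1] := hx _ e2; have [N2 h2] := hy _ e2.
have := h1 (maxn N1 N2) (leq_maxl _ _); have := h2 (maxn N1 N2) (leq_maxr _ _).
rewrite !hnE => a b.
have := hn_tri hip x (u (maxn N1 N2)) y; have := hn_sym hip x (u (maxn N1 N2)).
lra.
Qed.

Lemma cauchy_lim u : cauchy_seq ip u -> tendsto ip u (lim u).
Proof. by move=> /(proj2 hV) h; apply: lim_spec. Qed.

Lemma tendsto_lin a u u' x x' : tendsto ip u x -> tendsto ip u' x' ->
  tendsto ip (fun n => a *: u n + u' n) (a *: x + x').
Proof.
move=> hu hu' e e0.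
set c := Num.sqrt (sqc a) + 1.
have c0 : 0 < c by rewrite ltr_pwDr // sqrtr_ge0.
have e2 : 0 < e / 2 / c by rewrite !divr_gt0.
have e3 : 0 < e / 2 by rewrite !divr_gt0.
have [N1 h1] := hu _ e2; have [N2 h2] := hu' _ e3.
exists (maxn N1 N2) => n hnn.
have {h1}h1 := h1 n (leq_trans (leq_maxl _ _) hnn).
have {h2}h2 := h2 n (leq_trans (leq_maxr _ _) hnn).
rewrite !hnE in h1 h2 *.
have -> : a *: u n + u' n - (a *: x + x') = a *: (u n - x) + (u' n - x').
  by rewrite scalerBr opprD !addrA; congr (_ + _); rewrite addrAC.
apply: le_lt_trans (hnD hip _ _) _; rewrite (hnZ hip).
have hs : 0 <= Num.sqrt (sqc a) by apply: sqrtr_ge0.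
have hh : 0 <= hn (u n - x) by apply: hn_ge0.
have : Num.sqrt (sqc a) * hn (u n - x) <= c * (e / 2 / c).
  apply: ler_pM => //; [rewrite /c; lra | exact: ltW].
have -> : c * (e / 2 / c) = e / 2 by field; lra.
lra.
Qed.

Lemma tendsto_ev u x N : (forall n, (N <= n)%N -> u n = x) -> tendsto ip u x.
Proof.
move=> h e e0; exists N => n /h ->; rewrite subrr hnE.
by rewrite /P1.hn /P1.N2 ip0l // sqrtr0.
Qed.

Lemma tendsto_ip u x y c N : tendsto ip u x ->
  (forall n, (N <= n)%N -> ip (u n) y = c) -> ip x y = c.
Proof.
move=> hu hc; apply/eqP; rewrite -subr_eq0; apply/eqP.
set d := ip x y - c.
suff : sqc d = 0.
  rewrite /sqc; case: (d) => a b /= h.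
  have ha : a = 0 by apply/eqP; rewrite -sqrf_eq0 eq_le sqr_ge0 andbT -h lerDl sqr_ge0.
  have hb : b = 0 by apply/eqP; rewrite -sqrf_eq0 eq_le sqr_ge0 andbT -h lerDr sqr_ge0.
  by rewrite ha hb.
apply/eqP; rewrite eq_le sqc_ge0 andbT.
apply/ler_addgt0Pr => e e0; rewrite add0r.
set K := N2 y + 1.
have K0 : 0 < K by have := N2_ge0 hip y; rewrite /K; lra.
have eK : 0 < Num.sqrt (e / K) by rewrite sqrtr_gt0 divr_gt0.
have [M hM] := hu _ eK.
set n := maxn M N.
have {hM} := hM n (leq_maxl _ _); rewrite hnE => hM.
have := CS hip (u n - x) y.
rewrite ipBl // hc ?leq_maxr // -opprB.
have -> : sqc (- d) = sqc d by rewrite /sqc; case: (d) => ? ? /=; rewrite !sqrrN.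
move=> h; apply: le_trans h _.
have : N2 (u n - x) <= e / K.
  rewrite -(hn_sqr hip) -(sqr_sqrtr (ltW (divr_gt0 e0 K0))).
  by rewrite ler_pXn2r ?nnegrE ?hn_ge0 ?sqrtr_ge0 // ltW.
have h0 := N2_ge0 hip (u n - x).
have hy := N2_ge0 hip y.
move=> h1; apply: le_trans (_ : e / K * N2 y <= e).
  by apply: ler_wpM2r.
rewrite mulrAC ler_pdivrMr // ler_pM2l // /K; lra.
Qed.
End Lim.


Section Series.
Variables (R : realType) (V : lmodType R[i]) (ip : V -> V -> R[i]).
Hypothesis hV : hilbert ip.
Let hip : is_inner_product ip := proj1 hV.
Local Notation hn := (hn ip).
Local Notation N2 := (N2 ip).

Definition ps (u : nat -> V) n := \sum_(0 <= j < n) u j.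

Lemma ps_diff u n m : (n <= m)%N -> ps u m - ps u n = \sum_(n <= j < m) u j.
Proof. by move=> h; rewrite /ps (big_cat_nat (leq0n n) h) /= addrC addrK. Qed.

Lemma hn_sum (u : nat -> V) n m : hn (\sum_(n <= j < m) u j) <= \sum_(n <= j < m) hn (u j).
Proof.
apply: (big_rec2 (fun a b => hn a <= b)); first by rewrite hn0 //.
move=> i a b _ h; apply: le_trans (hnD hip _ _) _; exact: lerD.
Qed.

Lemma cauchy_ps u :
  (forall e, 0 < e -> exists N, forall n m, (N <= n)%N -> hn (\sum_(n <= j < m) u j) < e) ->
  cauchy_seq ip (ps u).
Proof.
move=> h e e0; have [N hN] := h e e0; exists N => n m hn hm.
rewrite hnE.
have [nm|mn] := leqP n m.
  by rewrite (hn_sym hip) ps_diff // hN.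
by rewrite ps_diff ?hN // ltnW.
Qed.

Lemma tendsto_hn_le u x M N : tendsto ip u x -> (forall n, (N <= n)%N -> hn (u n) <= M) ->
  hn x <= M.
Proof.
move=> hu hM; apply/ler_addgt0Pr => e e0.
have [K hK] := hu e e0.
have := hK (maxn K N) (leq_maxl _ _); have := hM (maxn K N) (leq_maxr _ _).
rewrite hnE => a b.
have := hn_tri hip x (u (maxn K N)) 0; rewrite !subr0 (hn_sym hip x).
lra.
Qed.

Lemma tendsto_map (T : V -> V) u x : bounded_linear_endo ip T -> tendsto ip u x ->
  tendsto ip (fun n => T (u n)) (T x).
Proof.
move=> [lT [M hM]] hu e e0.
set c := `|M| + 1.
have c0 : 0 < c by rewrite /c ltr_pwDr.
have [N hN] := hu (e / c) (divr_gt0 e0 c0).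
exists N => n /hN; rewrite !hnE => h.
have -> : T (u n) - T x = T (u n - x).
  have := lT (-1) x (u n); rewrite !scaleN1r => e1.
  by rewrite [u n - x]addrC e1 addrC.
have := hM (u n - x); rewrite !hnE => h2.
apply: le_lt_trans h2 _.
have h0 : 0 <= hn (u n - x) by apply: hn_ge0.
apply: (@le_lt_trans _ _ (c * hn (u n - x))).
  by apply: ler_wpM2r => //; rewrite /c; have := ler_norm M; lra.
by rewrite -ltr_pdivlMl // mulrC.
Qed.

End Series.


Lemma sum_delta (U : zmodType) (F : nat -> U) i n : (i < n)%N ->
  (forall j, j != i -> F j = 0) -> \sum_(0 <= j < n) F j = F i.
Proof.
move=> hi h; rewrite (bigD1_seq i) /= ?mem_index_iota ?iota_uniq //.
by rewrite big1 ?addr0 // => j /h.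
Qed.

Lemma sqcM (R : rcfType) (x y : R[i]) : sqc (x * y) = sqc x * sqc y.
Proof. by case: x => a b; case: y => c d; rewrite /sqc /=; ring. Qed.

Lemma Re_sum (R : rcfType) (F : nat -> R[i]) n m :
  complex.Re (\sum_(n <= j < m) F j) = \sum_(n <= j < m) complex.Re (F j).
Proof.
apply: (big_rec2 (fun a b => complex.Re a = b)) => // i a b _ <-.
by case: (F i); case: a.
Qed.

Lemma amgm (R : rcfType) (s t : R) : 0 <= s -> Num.sqrt s * t <= (s + t ^+ 2) / 2.
Proof.
move=> s0; have := sqr_ge0 (Num.sqrt s - t); rewrite sqrrB sqr_sqrtr //.
lra.
Qed.

Section ONB.
Variables (R : realType) (V : lmodType R[i]) (ip : V -> V -> R[i]).
Hypothesis hV : hilbert ip.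
Let hip : is_inner_product ip := proj1 hV.
Local Notation hn := (hn ip).
Local Notation N2 := (N2 ip).
Variable e : nat -> V.
Hypothesis he : orthonormal_basis ip e.

Lemma ee i : ip (e i) (e i) = 1. Proof. by case: he. Qed.
Lemma eij i j : i <> j -> ip (e i) (e j) = 0. Proof. by case: he => _ [h _]; apply: h. Qed.
Lemma onb_complete x : (forall i, ip x (e i) = 0) -> x = 0.
Proof. by case: he => _ [_ h]; apply: h. Qed.

Lemma onb_ext x y : (forall i, ip x (e i) = ip y (e i)) -> x = y.
Proof.
move=> h; apply/eqP; rewrite -subr_eq0; apply/eqP; apply: onb_complete => i.
by rewrite (ipBl hip) // h subrr.
Qed.

Lemma ip_suml (F : nat -> V) y n m :
  ip (\sum_(n <= j < m) F j) y = \sum_(n <= j < m) ip (F j) y.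
Proof.
apply: (big_rec2 (fun a b => ip a y = b)); first by rewrite (ip0l hip).
by move=> i a b _ <-; rewrite (ipDl hip).
Qed.

Lemma ip_sumr (F : nat -> V) y n m :
  ip y (\sum_(n <= j < m) F j) = \sum_(n <= j < m) ip y (F j).
Proof.
apply: (big_rec2 (fun a b => ip y a = b)); first by rewrite (ip0r hip).
by move=> i a b _ <-; rewrite (ipDr hip).
Qed.

Lemma N2e i : N2 (e i) = 1.
Proof. by rewrite /P1.N2 ee. Qed.

Lemma coef_sum (c : nat -> R[i]) i n : (i < n)%N ->
  ip (\sum_(0 <= j < n) c j *: e j) (e i) = c i.
Proof.
move=> hi; rewrite ip_suml (sum_delta (i := i)) // ?(ipZl hip) ?ee ?mulr1 //.
by move=> j /eqP hj; rewrite (ipZl hip) eij ?mulr0.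
Qed.

Lemma pyth (c : nat -> R[i]) n m :
  N2 (\sum_(n <= j < m) c j *: e j) = \sum_(n <= j < m) sqc (c j).
Proof.
elim: m => [|m IH]; first by rewrite !big_geq // /P1.N2 (ip0l hip).
have [nm|mn] := leqP n m; last by rewrite !big_geq // /P1.N2 (ip0l hip).
rewrite !big_nat_recr //= (N2D hip) IH (N2Z hip) N2e mulr1.
have h0 : \sum_(n <= j < m) ip (c j *: e j) (e m) = 0.
  rewrite big1_seq //= => j.
  rewrite mem_index_iota => /andP[_ hj].
  by rewrite (ipZl hip) eij ?mulr0 // => ej; rewrite ej ltnn in hj.
by rewrite (ipZr hip) ip_suml h0 mulr0 /= mulr0 addr0.
Qed.

Lemma bessel a n : \sum_(0 <= j < n) sqc (ip a (e j)) <= N2 a.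
Proof.
set p := \sum_(0 <= j < n) ip a (e j) *: e j.
have := N2_ge0 hip (a - p); rewrite (N2D hip) (N2N hip) pyth (ipNr hip).
have -> : Re (- ip a p) = - \sum_(0 <= j < n) sqc (ip a (e j)).
  rewrite /p ip_sumr.
  have -> : forall c : R[i], Re (- c) = - Re c by case.
  congr (- _); rewrite Re_sum; apply: eq_bigr => j _.
  rewrite (ipZr hip); case: (ip a (e j)) => x y; rewrite /sqc /=; ring.
lra.
Qed.

Definition Ser (c : nat -> R[i]) a := lim ip (ps (fun j => (c j * ip a (e j)) *: e j)).

Variables (c : nat -> R[i]) (B : R).
Hypothesis hc : forall j, sqc (c j) <= B.

Lemma B_ge0 : 0 <= B.
Proof. by apply: le_trans (hc 0); apply: sqc_ge0. Qed.

Lemma Ser_tendsto a : tendsto ip (ps (fun j => (c j * ip a (e j)) *: e j)) (Ser c a).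
Proof.
apply: cauchy_lim => //; apply: cauchy_ps => // eps eps0.
have hB := B_ge0.
have hbess : forall n, \sum_(0 <= j < n) (B * sqc (ip a (e j))) <= B * N2 a.
  by move=> n; rewrite -mulr_sumr ler_wpM2l // bessel.
have [N hN] := tail_small (fun j => mulr_ge0 hB (sqc_ge0 (ip a (e j)))) hbess
   (exprn_gt0 2 eps0).
exists N => n m hn.
rewrite -(ltr_pXn2r (_ : 0 < 2)%N) ?nnegrE ?hn_ge0 ?ltW // (hn_sqr hip) // pyth.
apply: le_lt_trans (hN n m hn).
by apply: ler_sum => j _; rewrite sqcM ler_wpM2r // sqc_ge0.
Qed.

Lemma Ser_coef a i : ip (Ser c a) (e i) = c i * ip a (e i).
Proof.
apply: (tendsto_ip hV (Ser_tendsto a) (N := i.+1)) => n hn.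
by rewrite /ps coef_sum.
Qed.

Lemma Ser_bound a : hn (Ser c a) <= Num.sqrt B * hn a.
Proof.
apply: (tendsto_hn_le hV (Ser_tendsto a) (N := 0)) => n _.
have hB := B_ge0.
rewrite /hn -sqrtrM // ler_sqrt ?mulr_ge0 ?N2_ge0 // /ps pyth.
apply: le_trans (_ : \sum_(0 <= j < n) (B * sqc (ip a (e j))) <= _).
  by apply: ler_sum => j _; rewrite sqcM ler_wpM2r // sqc_ge0.
by rewrite -mulr_sumr ler_wpM2l // bessel.
Qed.

Lemma Ser_lin k a b : Ser c (k *: a + b) = k *: Ser c a + Ser c b.
Proof.
apply: onb_ext => i; rewrite (ipDl hip) (ipZl hip) !Ser_coef (ip_lin hip).
ring.
Qed.

Lemma Ser_e j : Ser c (e j) = c j *: e j.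
Proof.
apply: onb_ext => i; rewrite Ser_coef (ipZl hip) //.
have [->|ij] := eqVneq i j; first by rewrite ee mulr1.
by rewrite !eij ?mulr0 // => h; move/eqP: ij; apply; rewrite h.
Qed.

End ONB.

Section ONB2.
Variables (R : realType) (V : lmodType R[i]) (ip : V -> V -> R[i]).
Hypothesis hV : hilbert ip.
Let hip : is_inner_product ip := proj1 hV.
Variable e : nat -> V.
Hypothesis he : orthonormal_basis ip e.

Lemma Ser_inv (c d : nat -> R[i]) Bc Bd a : (forall j, sqc (c j) <= Bc) ->
  (forall j, sqc (d j) <= Bd) ->
  (forall j, c j * d j = 1) -> Ser ip e c (Ser ip e d a) = a.
Proof.
move=> hc hd hcd; apply: (onb_ext hV he) => i.
by rewrite (Ser_coef hV he hc) (Ser_coef hV he hd) mulrA hcd mul1r.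
Qed.

Lemma Ser_inj (c : nat -> R[i]) Bc a : (forall j, sqc (c j) <= Bc) ->
  (forall j, c j != 0) -> Ser ip e c a = 0 -> a = 0.
Proof.
move=> hc hc0 h; apply: (onb_complete he) => i.
have := Ser_coef hV he hc a i; rewrite h (ip0l hip) => /esym/eqP.
by rewrite mulf_eq0 (negbTE (hc0 i)) /= => /eqP.
Qed.
End ONB2.


Section KS.
Variables (R : realType) (V U : lmodType R[i]) (ip : V -> V -> R[i]) (ipU : U -> U -> R[i]).
Hypothesis hV : hilbert ip.
Hypothesis hU : hilbert ipU.
Let hip : is_inner_product ip := proj1 hV.
Let hipU : is_inner_product ipU := proj1 hU.
Variable e : nat -> V.
Hypothesis he : orthonormal_basis ip e.
Variables (c : nat -> R[i]) (B : R) (v : nat -> U) (M : R).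
Hypothesis hc : forall j, sqc (c j) <= B.
Hypothesis hv : forall n, \sum_(0 <= j < n) N2 ipU (v j) <= M.

Definition Kser a := lim ipU (ps (fun j => (c j * ip a (e j)) *: v j)).

Let f a j := sqc (c j * ip a (e j)) + N2 ipU (v j).

Lemma f_ge0 a j : 0 <= f a j.
Proof. by rewrite /f addr_ge0 ?sqc_ge0 ?N2_ge0. Qed.

Lemma f_sum a n : \sum_(0 <= j < n) f a j <= B * N2 ip a + M.
Proof.
rewrite big_split /=; apply: lerD => //.
apply: le_trans (_ : \sum_(0 <= j < n) (B * sqc (ip a (e j))) <= _).
  by apply: ler_sum => j _; rewrite sqcM ler_wpM2r // sqc_ge0.
by rewrite -mulr_sumr ler_wpM2l ?(B_ge0 hc) // bessel.
Qed.

Lemma K_abs a n m : hn ipU (\sum_(n <= j < m) (c j * ip a (e j)) *: v j)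
   <= (\sum_(n <= j < m) f a j) / 2.
Proof.
apply: le_trans (hn_sum hU _ _ _) _.
rewrite mulr_suml; apply: ler_sum => j _.
rewrite (hnZ hipU) /f -(hn_sqr hipU); apply: amgm; exact: sqc_ge0.
Qed.

Lemma Kser_tendsto a : tendsto ipU (ps (fun j => (c j * ip a (e j)) *: v j)) (Kser a).
Proof.
apply: cauchy_lim => //; apply: cauchy_ps => // eps eps0.
have [N hN] := tail_small (f_ge0 a) (f_sum a) eps0.
exists N => n m hn; apply: le_lt_trans (K_abs a n m) _.
apply: le_lt_trans (hN n m hn).
have : 0 <= \sum_(n <= j < m) f a j by apply: sumr_ge0 => j _; exact: f_ge0.
lra.
Qed.

Lemma Kser_lin k a b : Kser (k *: a + b) = k *: Kser a + Kser b.
Proof.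
apply: (tendsto_unique hU (Kser_tendsto _)).
have := tendsto_lin hU k (Kser_tendsto a) (Kser_tendsto b).
suff -> : ps (fun j => (c j * ip (k *: a + b) (e j)) *: v j) =
  (fun n => k *: ps (fun j => (c j * ip a (e j)) *: v j) n +
            ps (fun j => (c j * ip b (e j)) *: v j) n) by [].
apply: FunctionalExtensionality.functional_extensionality => n.
rewrite /ps scaler_sumr -big_split /=; apply: eq_bigr => j _.
by rewrite (ip_lin hip) scalerA -scalerDl; congr (_ *: _); ring.
Qed.

Lemma Kser0 : Kser 0 = 0.
Proof.
have := Kser_lin 1 0 0; rewrite scaler0 addr0 scale1r => h.
by apply: (@addrI _ (Kser 0)); rewrite addr0 -h.
Qed.

Lemma Kser_e j : Kser (e j) = c j *: v j.
Proof.
apply: (tendsto_unique hU (Kser_tendsto _)).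
apply: (tendsto_ev hU (N := j.+1)) => n hn.
rewrite /ps (sum_delta (i := j)) ?(ee he) ?mulr1 // => i /eqP ij.
by rewrite (eij he) ?mulr0 ?scale0r // => h; apply: ij.
Qed.

Lemma Kser_bound : exists K, forall a, hn ipU (Kser a) <= K * hn ip a.
Proof.
exists ((B + M) / 2) => a.
have hB := B_ge0 hc.
have hM : 0 <= M by apply: le_trans (hv 0); rewrite big_geq.
have [a0|an] := eqVneq (hn ip a) 0.
  by rewrite (hn_eq0 hip a0) Kser0 (hn0 hipU) (hn0 hip) mulr0.
have ha : 0 < hn ip a by rewrite lt_def an hn_ge0.
set a' := ((hn ip a)^-1)%:C *: a.
have ha' : hn ip a' = 1.
  by rewrite /a' (hnZ hip) sqc_real sqrtr_sqr ger0_norm ?invr_ge0 ?hn_ge0 // mulVf.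
have -> : a = (hn ip a)%:C *: a'.
  rewrite /a' scalerA -[X in X = _]scale1r; congr (_ *: _).
  by rewrite -rmorphM /= divff.
have hk : Kser ((hn ip a)%:C *: a') = (hn ip a)%:C *: Kser a'.
  by rewrite -[X in Kser X]addr0 Kser_lin Kser0 addr0.
rewrite hk (hnZ hipU) sqc_real sqrtr_sqr.
rewrite ger0_norm ?hn_ge0 // (hnZ hip) sqc_real sqrtr_sqr ger0_norm ?hn_ge0 // ha' mulr1.
rewrite mulrC ler_wpM2r ?hn_ge0 //.
apply: (tendsto_hn_le hU (Kser_tendsto a') (N := 0)) => n _.
apply: le_trans (K_abs a' 0 n) _.
rewrite ler_pM2r ?invr_gt0 //; apply: le_trans (f_sum a' n) _.
by rewrite lerD2r -(hn_sqr hip) ha' expr1n mulr1.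
Qed.

End KS.


Section Reals.
Variable R : realType.

Lemma small_inv (eps : R) : 0 < eps -> exists N, forall n, (N <= n)%N -> ((n.+1)%:R)^-1 < eps.
Proof.
move=> e0; exists (Num.Def.trunc (eps^-1)) => n hn.
have h1 := truncnS_gt (eps^-1).
have h2 : (Num.Def.trunc (eps^-1)).+1%:R <= (n.+1)%:R :> R by rewrite ler_nat ltnS.
rewrite -(invrK eps) ltf_pV2 ?posrE ?ltr0Sn ?invr_gt0 //.
exact: lt_le_trans h1 h2.
Qed.

Definition g (n : nat) : R := (2^-1) ^+ n.

Lemma g_ge0 n : 0 <= g n.
Proof. by rewrite /g exprn_ge0 // invr_ge0. Qed.

Lemma g_le n : g n <= ((n.+1)%:R)^-1.
Proof.
rewrite /g exprVn lef_pV2 ?posrE ?ltr0Sn ?exprn_gt0 //.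
elim: n => [|n IH]; first by rewrite expr0.
have -> : (n.+2)%:R = (n.+1)%:R + 1 :> R by rewrite natr1.
have : 1 <= (2 : R) ^+ n by rewrite exprn_ege1 // ler1n.
rewrite exprS; lra.
Qed.

Lemma g_sum n : \sum_(0 <= i < n) g i = 2 - 2 * g n.
Proof.
elim: n => [|n IH]; first by rewrite big_geq // /g expr0; lra.
by rewrite big_nat_recr //= IH /g exprS; field.
Qed.

Lemma g_S n : g n.+1 = g n / 2.
Proof. by rewrite /g exprS mulrC. Qed.

Lemma g_small (eps : R) : 0 < eps -> exists N, forall n, (N <= n)%N -> g n < eps.
Proof.
move=> /small_inv [N hN]; exists N => n /hN; exact: le_lt_trans (g_le n).
Qed.
Lemma g_anti N n : (N <= n)%N -> g n <= g N.
Proof.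
move=> h; rewrite -(subnKC h) /g exprD.
have h1 : (2^-1 : R) ^+ (n - N) <= 1.
  apply: exprn_ile1; first by rewrite invr_ge0; lra.
  rewrite invf_le1; lra.
have h0 : 0 <= (2^-1 : R) ^+ N by rewrite exprn_ge0 // invr_ge0.
by rewrite ler_piMr.
Qed.

Lemma g_pos n : 0 < g n.
Proof. by rewrite /g exprn_gt0 // invr_gt0. Qed.
Lemma g0 : g 0 = 1. Proof. by rewrite /g expr0. Qed.
End Reals.

Lemma zid (V : zmodType) (a b c d : V) : a - b - d = (a - (c + d)) - (b - c).
Proof.
by rewrite opprB opprD addrA [_ + c]addrC !addrA [c + a]addrC addrK addrAC.
Qed.

Section OM.
Variables (R : realType) (V : lmodType R[i]) (ip : V -> V -> R[i]).
Hypothesis hV : hilbert ip.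
Let hip : is_inner_product ip := proj1 hV.
Local Notation hn := (hn ip).
Variable T : V -> V.
Hypothesis hT : bounded_linear_endo ip T.
Hypothesis hTb : bijective T.

Let lT : forall a x y, T (a *: x + y) = a *: T x + T y := proj1 hT.

Lemma T0 : T 0 = 0.
Proof.
have := lT 1 0 0; rewrite scaler0 addr0 scale1r => h.
by apply: (@addrI _ (T 0)); rewrite addr0 -h.
Qed.
Lemma TD x y : T (x + y) = T x + T y.
Proof. by rewrite -[x in LHS]scale1r lT scale1r. Qed.
Lemma TZ a x : T (a *: x) = a *: T x.
Proof. by rewrite -[a *: x]addr0 lT T0 addr0. Qed.
Lemma TN x : T (- x) = - T x.
Proof. by rewrite -scaleN1r TZ scaleN1r. Qed.
Lemma TB x y : T (x - y) = T x - T y.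
Proof. by rewrite TD TN. Qed.

Lemma stepA : exists (n : nat) (y0 : V) (r : R), 0 < r /\
  forall y, hn (y - y0) < r -> forall eps, 0 < eps ->
    exists x, hn x <= n%:R /\ hn (T x - y) < eps.
Proof.
apply: NNPP => hA.
pose P (n : nat) (y0 : V) (r : R) (p : V * R) :=
  hn (p.1 - y0) < r /\ 0 < p.2 /\ forall x, hn x <= n%:R -> p.2 <= hn (T x - p.1).
have H : forall n y0 r, 0 < r -> exists p, P n y0 r p.
  move=> n y0 r r0; apply: NNPP => hno; apply: hA; exists n, y0, r; split => //.
  move=> y hy eps eps0; apply: NNPP => hx; apply: hno; exists (y, eps).
  split => //; split => // x hx'; rewrite leNgt; apply/negP => hlt.
  by apply: hx; exists x.
pose st n y0 r := epsilon (inhabits ((0 : V), (0 : R))) (P n y0 r).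
have stP : forall n y0 r, 0 < r -> P n y0 r (st n y0 r).
  by move=> n y0 r r0; apply: epsilon_spec; apply: H.
pose fix sq (k : nat) : V * R := match k with
  | 0 => ((0 : V), (1 : R))
  | k'.+1 => let p := st k' (sq k').1 ((sq k').2 / 2) in
             (p.1, Num.min (p.2 / 2) ((sq k').2 / 4)) end.
pose y k := (sq k).1; pose r k := (sq k).2.
have r_pos : forall k, 0 < r k.
  elim => [|k IH]; first by rewrite /r /=; lra.
  have [_ [h2 _]] := stP k (y k) (r k / 2) (divr_gt0 IH (ltr0Sn _ 1)).
  rewrite /r /= lt_min; apply/andP; split; rewrite divr_gt0 //.
pose p k := st k (y k) (r k / 2).
have hP : forall k, P k (y k) (r k / 2) (p k).
  by move=> k; apply: stP; rewrite divr_gt0.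
have ey : forall k, y k.+1 = (p k).1 by [].
have er : forall k, r k.+1 = Num.min ((p k).2 / 2) (r k / 4) by [].
have r_dec : forall k, r k.+1 <= r k / 4 by move=> k; rewrite er ge_min lexx orbT.
have r_eps : forall k, r k.+1 <= (p k).2 / 2 by move=> k; rewrite er ge_min lexx.
have dy : forall k, hn (y k.+1 - y k) < r k / 2.
  by move=> k; rewrite ey; case: (hP k).
have inv : forall n m, (n <= m)%N -> hn (y m - y n) <= 2/3 * (r n - r m).
  move=> n; elim => [|m IH].
    by rewrite leqn0 => /eqP ->; rewrite !subrr hn0 // mulr0.
  rewrite leq_eqVlt => /orP[/eqP ->|]; first by rewrite !subrr hn0 // mulr0.
  rewrite ltnS => /IH h.
  have := hn_tri hip (y m.+1) (y m) (y n); have := dy m; have := r_dec m.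
  have := r_pos m; lra.
have r_le : forall k, r k <= g R k.
  elim => [|k IH]; first by rewrite g0 /r /=.
  rewrite g_S; have := r_dec k; have := r_pos k; lra.
have yc : cauchy_seq ip y.
  move=> eps eps0; have [N hN] := g_small eps0.
  exists N => n m hnN hm; rewrite hnE.
  have gen : forall a b, (N <= a)%N -> (a <= b)%N -> hn (y b - y a) < eps.
    move=> a b ha hab; have := inv a b hab; have := r_pos b; have := r_le a.
    have := hN a ha; lra.
  have [nm|mn] := leqP n m.
    by rewrite (hn_sym hip); apply: gen.
  by apply: gen => //; apply: ltnW.
have hys := cauchy_lim hV yc.
set ys := lim ip y in hys.
have close : forall k, hn (ys - y k) <= 2/3 * r k.
  move=> k.
  have := tendsto_lin hV 1 hys (tendsto_ev hV (u := fun _ => - y k) (x := - y k) (N := 0) (fun _ _ => erefl)).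
  rewrite scale1r => ht.
  apply: (tendsto_hn_le hV ht (N := k)) => m hm; rewrite scale1r.
  have := inv k m hm; have := r_pos m; lra.
case: hTb => S TS ST.
set xs := S ys.
set k := (Num.Def.trunc (hn xs)).+1.
have hk : hn xs <= k%:R by apply: ltW; apply: truncnS_gt.
have [_ [p0 hp]] := hP k.
have := hp xs hk; rewrite -ey ST.
have := close k.+1; have := r_eps k; have := r_pos k.+1.
lra.
Qed.

Lemma stepB : exists (n : nat) (r : R), 0 < r /\
  forall y, hn y < r -> forall eps, 0 < eps ->
    exists x, hn x <= n%:R /\ hn (T x - y) < eps.
Proof.
have [n [y0 [r [r0 h]]]] := stepA.
exists (n + n)%N, r; split => // y hy eps eps0.
have e2 : 0 < eps / 2 by rewrite divr_gt0.
have hy1 : hn (y0 + y - y0) < r by rewrite addrC addKr.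
have hy2 : hn (y0 - y0) < r by rewrite subrr hn0.
have [x1 [h1 h1']] := h (y0 + y) hy1 _ e2.
have [x2 [h2 h2']] := h y0 hy2 _ e2.
exists (x1 - x2); split.
  rewrite natrD; apply: le_trans (hnB hip _ _) _; exact: lerD.
have -> : T (x1 - x2) - y = (T x1 - (y0 + y)) - (T x2 - y0).
  by rewrite TB (zid _ _ y0).
apply: le_lt_trans (hnB hip _ _) _; lra.
Qed.

Lemma stepC : exists K : R, 0 < K /\ forall y eps, 0 < eps ->
  exists x, hn x <= K * hn y /\ hn (T x - y) < eps.
Proof.
have [n [r [r0 h]]] := stepB.
exists (2 * n%:R / r + 1); split.
  have : 0 <= 2 * n%:R / r.
    apply: divr_ge0 (ltW r0); apply: mulr_ge0; [lra | exact: ler0n].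
  lra.
move=> y eps eps0.
have [y0|ny] := eqVneq (hn y) 0.
  exists 0; rewrite T0 sub0r (hnN hip) y0 hn0 // mulr0; split => //.
have hy : 0 < hn y by rewrite lt_def ny hn_ge0.
set t := r / (2 * hn y).
have t0 : 0 < t by rewrite divr_gt0 // mulr_gt0.
have hty : hn (t%:C *: y) < r.
  rewrite (hnZ hip) sqc_real sqrtr_sqr ger0_norm ?ltW // /t.
  have -> : r / (2 * hn y) * hn y = r / 2 by field; lra.
  lra.
have [x' [hx1 hx2]] := h _ hty (t * eps) (mulr_gt0 t0 eps0).
exists ((t^-1)%:C *: x'); split.
  rewrite (hnZ hip) sqc_real sqrtr_sqr ger0_norm ?invr_ge0 ?ltW //.
  have -> : t^-1 = 2 * hn y / r by rewrite /t invf_div.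
  have -> : (2 * n%:R / r + 1) * hn y = 2 * hn y / r * n%:R + hn y.
    by field; lra.
  have h3 : 0 <= 2 * hn y / r.
    apply: divr_ge0 (ltW r0); apply: mulr_ge0; [lra | exact: hn_ge0].
  have : 2 * hn y / r * hn x' <= 2 * hn y / r * n%:R by rewrite ler_wpM2l.
  lra.
have -> : T ((t^-1)%:C *: x') - y = (t^-1)%:C *: (T x' - t%:C *: y).
  rewrite TZ scalerBr scalerA -rmorphM /= mulVf ?gt_eqF // scale1r //.
rewrite (hnZ hip) sqc_real sqrtr_sqr ger0_norm ?invr_ge0 ?ltW //.
rewrite -(ltr_pM2l t0) mulrA mulfV ?gt_eqF // mul1r //.
Qed.

Lemma stepD : exists C : R, forall x, hn x <= C * hn (T x).
Proof.
have [K [K0 hK]] := stepC.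
case: hTb => S TS ST.
pose Q (y : V) (eps : R) (x : V) := 0 < eps -> hn x <= K * hn y /\ hn (T x - y) < eps.
pose ch y eps := epsilon (inhabits (0 : V)) (Q y eps).
have chP : forall y eps, 0 < eps -> hn (ch y eps) <= K * hn y /\ hn (T (ch y eps) - y) < eps.
  move=> y eps eps0; apply: (@epsilon_spec _ (inhabits (0 : V)) (Q y eps)) => //.
  by have [x hx] := hK y eps eps0; exists x.
exists (2 * K) => x0.
set y := T x0; set d := hn y.
have [d0|dn] := eqVneq d 0.
  have : y = 0 by apply: (hn_eq0 hip).
  rewrite /y -T0 => /(can_inj TS) ->; rewrite hn0 //; rewrite d0 mulr0 //.
have dp : 0 < d by rewrite lt_def dn hn_ge0.
pose fix res (i : nat) : V := match i with
  | 0 => y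
  | i'.+1 => res i' - T (ch (res i') (d * g R i'.+1)) end.
pose xi i := ch (res i) (d * g R i.+1).
have eres : forall i, res i.+1 = res i - T (xi i) by [].
have hxi : forall i, hn (xi i) <= K * hn (res i) /\ hn (T (xi i) - res i) < d * g R i.+1.
  by move=> i; apply: chP; rewrite mulr_gt0 // g_pos.
have hres1 : forall i, hn (res i.+1) <= d * g R i.+1.
  move=> i; have -> : res i.+1 = res i - T (xi i) := eres i.
  rewrite (hn_sym hip); apply: ltW; exact: (proj2 (hxi i)).
have hres : forall i, hn (res i) <= d * g R i.
  case => [|i]; first by rewrite g0 mulr1.
  exact: hres1.
have hx : forall i, hn (xi i) <= K * d * g R i.
  move=> i; apply: le_trans (proj1 (hxi i)) _; rewrite -mulrA ler_wpM2l // ?ltW //.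
have Tps : forall n, T (ps xi n) = y - res n.
  elim => [|n IH]; first by rewrite /ps big_geq // T0 /= subrr.
  have -> : res n.+1 = res n - T (xi n) := eres n.
  by rewrite /ps big_nat_recr // TD -/(ps xi n) IH opprB addrA addrAC.
have hf : forall n, \sum_(0 <= i < n) (K * d * g R i) <= 2 * (K * d).
  move=> n; rewrite -mulr_sumr g_sum.
  have := g_pos R n; have : 0 < K * d by rewrite mulr_gt0.
  move=> h1 h2; rewrite mulrC ler_pM2r //; lra.
have hc : cauchy_seq ip (ps xi).
  apply: cauchy_ps => // eps eps0.
  have [N hN] := tail_small (fun i => mulr_ge0 (mulr_ge0 (ltW K0) (ltW dp)) (g_ge0 R i)) hf eps0.
  exists N => n m hn; apply: le_lt_trans (hN n m hn).
  apply: le_trans (hn_sum hV _ _ _) _; apply: ler_sum => i _; exact: hx.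
have hs := cauchy_lim hV hc.
have hTs := tendsto_map hT hs.
have hTy : tendsto ip (fun n => T (ps xi n)) y.
  move=> eps eps0; have [N hN] := g_small (divr_gt0 eps0 dp).
  exists N => n hn; rewrite hnE Tps addrAC subrr add0r (hnN hip).
  apply: le_lt_trans (hres n) _; rewrite mulrC -ltr_pdivlMr //; exact: hN.
have e1 := tendsto_unique hV hTs hTy.
have -> : x0 = lim ip (ps xi) by rewrite -[x0]TS -/y -e1 TS.
apply: (tendsto_hn_le hV hs (N := 0)) => n _.
apply: le_trans (hn_sum hV _ _ _) _.
apply: le_trans (_ : \sum_(0 <= i < n) (K * d * g R i) <= _); last first.
  by rewrite -mulrA; apply: hf.
by apply: ler_sum => i _; exact: hx.
Qed.

End OM.


Section RB.
Variables (R : realType) (V : lmodType R[i]) (ip : V -> V -> R[i]).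
Hypothesis hV : hilbert ip.
Let hip : is_inner_product ip := proj1 hV.

Lemma rb_bounds (e : nat -> V) T : orthonormal_basis ip e -> bounded_linear_endo ip T ->
  bijective T -> exists C M : R, 0 < C /\ 0 <= M /\
    forall j, C^-1 <= hn ip (T (e j)) /\ hn ip (T (e j)) <= M.
Proof.
move=> he hT hTb.
have [C hC] := stepD hV hT hTb.
have [_ [M hM]] := hT.
have he1 : forall j, hn ip (e j) = 1.
  by move=> j; rewrite /P1.hn (N2e he) sqrtr1.
have hC1 : forall j, 1 <= C * hn ip (T (e j)) by move=> j; rewrite -(he1 j); apply: hC.
have C0 : 0 < C.
  have h1 := hC1 0; have h2 := hn_ge0 ip (T (e 0)).
  rewrite ltNge; apply/negP => hc; have := mulr_le0_ge0 hc h2; lra.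
have hM1 : forall j, hn ip (T (e j)) <= M.
  by move=> j; have := hM (e j); rewrite !hnE he1 mulr1.
exists C, M; split => //; split.
  by apply: le_trans (hM1 0); apply: hn_ge0.
move=> j; split => //.
by rewrite -(ler_pM2l C0) mulfV ?gt_eqF // hC1.
Qed.

End RB.

Lemma Ser0 (R : realType) (V : lmodType R[i]) (ip : V -> V -> R[i]) (hV : hilbert ip)
  (e : nat -> V) (he : orthonormal_basis ip e) (c : nat -> R[i]) B :
  (forall j, sqc (c j) <= B) -> Ser ip e c 0 = 0.
Proof.
move=> hc; apply: (onb_ext hV he) => i.
by rewrite (Ser_coef hV he hc) !(ip0l (proj1 hV)) mulr0.
Qed.

Lemma bij_of (T : Type) (x0 : T) (f : T -> T) :
  (forall x y, f x = f y -> x = y) -> (forall y, exists x, f x = y) -> bijective f.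
Proof.
move=> hi hs.
pose g y := epsilon (inhabits x0) (fun x => f x = y).
have gs : forall y, f (g y) = y.
  by move=> y; exact: (epsilon_spec (inhabits x0) (fun x => f x = y) (hs y)).
have c1 : cancel f g by move=> x; apply: (hi (g (f x)) x); rewrite gs.
by exists g.
Qed.

Lemma bound_abs (R : realType) (V U : lmodType R[i]) (ip : V -> V -> R[i]) (ipU : U -> U -> R[i])
  (f : V -> U) (M : R) : (forall x, hn ipU (f x) <= M * hn ip x) ->
  forall x, hn ipU (f x) <= `|M| * hn ip x.
Proof.
move=> h x; apply: le_trans (h x) _; apply: ler_wpM2r; first exact: hn_ge0.
exact: ler_norm.
Qed.

Section Prod.
Variables (R : realType) (Z W : lmodType R[i]) (ipZ : Z -> Z -> R[i]) (ipW : W -> W -> R[i]).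
Hypothesis hipZ : is_inner_product ipZ.
Hypothesis hipW : is_inner_product ipW.

Lemma hnX a b : hnorm (prod_ip ipZ ipW) (a, b) = Num.sqrt (N2 ipZ a + N2 ipW b).
Proof. by rewrite /hnorm /prod_ip /N2 /=; case: (ipZ a a) => ? ?; case: (ipW b b). Qed.

Lemma hnX_le1 a b : hn ipZ a <= hnorm (prod_ip ipZ ipW) (a, b).
Proof. by rewrite hnX ler_sqrt ?addr_ge0 ?N2_ge0 // lerDl N2_ge0. Qed.
Lemma hnX_le2 a b : hn ipW b <= hnorm (prod_ip ipZ ipW) (a, b).
Proof. by rewrite hnX ler_sqrt ?addr_ge0 ?N2_ge0 // lerDr N2_ge0. Qed.
Lemma hnX_ub a b : hnorm (prod_ip ipZ ipW) (a, b) <= hn ipZ a + hn ipW b.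
Proof.
rewrite hnX -(ler_pXn2r (_ : 0 < 2)%N) ?nnegrE ?sqrtr_ge0 ?addr_ge0 ?hn_ge0 //.
rewrite sqr_sqrtr ?addr_ge0 ?N2_ge0 // -(hn_sqr hipZ) -(hn_sqr hipW).
have := hn_ge0 ipZ a; have := hn_ge0 ipW b; nra.
Qed.
End Prod.



Unset Implicit Arguments.
Theorem proposition2p9 (R : realType) (Z W Y : lmodType R[i])
  (ipZ : Z -> Z -> R[i]) (ipW : W -> W -> R[i]) (ipY : Y -> Y -> R[i])
  (hZ : hilbert ipZ) (hW : hilbert ipW) (hY : hilbert ipY)
  (DA : Z -> Prop) (A : Z -> Z) (DE : W -> Prop) (E : W -> W)
  (hA : closed_densely_defined ipZ DA A) (hE : closed_densely_defined ipW DE E)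
  (DEs : W -> Prop) (Es : W -> W) (hEs : is_adjoint ipW DE E DEs Es)
  (C : Z -> Y) (hC : bounded_on_domain ipZ ipY DA A C)
  (F : Y -> W -> R[i]) (hF : bounded_into_extrapolation ipY ipW DEs Es F)
  (z : nat -> Z) (lam : nat -> R[i]) (w : nat -> W) (mu : nat -> R[i])
  (hz : riesz_basis ipZ z) (hzA : forall j, DA (z j) /\ A (z j) = lam j *: z j)
  (hw : riesz_basis ipW w) (hwE : forall k, DE (w k) /\ E (w k) = mu k *: w k)
  (hdisj : forall l, op_eigenvalue DA A l -> ~ op_eigenvalue DE E l)
  (v : nat -> W)
  (hv : forall j, is_ext_resolvent ipW DEs Es (lam j) (F (C (z j))) (v j))
  (hsum : exists M : R, forall n, \sum_(j < n) hnorm ipW (v j) ^+ 2 <= M) :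
  riesz_basis (prod_ip ipZ ipW)
    (fun i : nat + nat => match i with
       | inl j => normalize (prod_ip ipZ ipW) (z j, v j)
       | inr k => normalize (prod_ip ipZ ipW) (0, w k)
       end).
Proof.
have hipZ := proj1 hZ; have hipW := proj1 hW.
case: hz => ez [Tz [hez hTz hTzb ezq]].
case: hw => ew [Tw [hew hTw hTwb ewq]].
case: hsum => M hM.
have hv2 : forall n, \sum_(0 <= j < n) N2 ipW (v j) <= M.
  move=> n; rewrite big_mkord; apply: le_trans (hM n).
  by apply: ler_sum => j _; rewrite hnE (hn_sqr hipW).
have hM0 : 0 <= M by apply: le_trans (hv2 0); rewrite big_geq.
have hvj : forall j, N2 ipW (v j) <= M.
  move=> j; apply: le_trans (hv2 j.+1); rewrite big_nat_recr //= lerDr.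
  by apply: sumr_ge0 => i _; apply: N2_ge0.
have [Cz [Mz [Cz0 [Mz0 hbz]]]] := rb_bounds hZ hez hTz hTzb.
have [Cw [Mw [Cw0 [Mw0 hbw]]]] := rb_bounds hW hew hTw hTwb.
pose X := prod_ip ipZ ipW.
pose nz j := hnorm X (z j, v j).
pose nw k := hnorm X ((0 : Z), w k).
have nzE : forall j, nz j = Num.sqrt (N2 ipZ (z j) + N2 ipW (v j)) by move=> j; apply: hnX.
have nwE : forall k, nw k = hn ipW (w k).
  by move=> k; rewrite /nw hnX /P1.N2 (ip0l hipZ) add0r.
have Cz1 : 0 < Cz^-1 by rewrite invr_gt0.
have Cw1 : 0 < Cw^-1 by rewrite invr_gt0.
have nz_lo : forall j, Cz^-1 <= nz j.
  move=> j; have [h _] := hbz j; rewrite -ezq in h; apply: le_trans h _.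
  by rewrite nzE ler_sqrt ?addr_ge0 ?N2_ge0 // lerDl N2_ge0.
have nz_hi : forall j, nz j ^+ 2 <= Mz ^+ 2 + M.
  move=> j; rewrite nzE sqr_sqrtr ?addr_ge0 ?N2_ge0 //; apply: lerD => //.
  have [_ h] := hbz j; rewrite -ezq in h; rewrite -(hn_sqr hipZ).
  by rewrite lerXn2r ?nnegrE ?hn_ge0.
have nw_lo : forall k, Cw^-1 <= nw k.
  by move=> k; have [h _] := hbw k; rewrite -ewq in h; rewrite nwE.
have nw_hi : forall k, nw k ^+ 2 <= Mw ^+ 2.
  move=> k; have [_ h] := hbw k; rewrite -ewq in h; rewrite nwE.
  by rewrite lerXn2r ?nnegrE ?hn_ge0.
have nz_pos : forall j, 0 < nz j by move=> j; apply: lt_le_trans (nz_lo j).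
have nw_pos : forall k, 0 < nw k by move=> k; apply: lt_le_trans (nw_lo k).
pose c1 j := ((nz j)^-1)%:C; pose d1 j := (nz j)%:C.
pose c2 k := ((nw k)^-1)%:C; pose d2 k := (nw k)%:C.
have hc1 : forall j, sqc (c1 j) <= Cz ^+ 2.
  move=> j; rewrite /c1 sqc_real lerXn2r ?nnegrE ?invr_ge0 ?(ltW Cz0) ?(ltW (nz_pos j)) //.
  by rewrite invf_ple ?posrE.
have hc2 : forall k, sqc (c2 k) <= Cw ^+ 2.
  move=> k; rewrite /c2 sqc_real lerXn2r ?nnegrE ?invr_ge0 ?(ltW Cw0) ?(ltW (nw_pos k)) //.
  by rewrite invf_ple ?posrE.
have hd1 : forall j, sqc (d1 j) <= Mz ^+ 2 + M by move=> j; rewrite /d1 sqc_real.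
have hd2 : forall k, sqc (d2 k) <= Mw ^+ 2 by move=> k; rewrite /d2 sqc_real.
have cd1 : forall j, c1 j * d1 j = 1.
  by move=> j; rewrite /c1 /d1 -rmorphM /= mulVf ?gt_eqF.
have cd2 : forall k, c2 k * d2 k = 1.
  by move=> k; rewrite /c2 /d2 -rmorphM /= mulVf ?gt_eqF.
have c1n : forall j, c1 j != 0.
  by move=> j; apply/eqP => h; have := cd1 j; rewrite h mul0r => /eqP; rewrite eq_sym oner_eq0.
have c2n : forall k, c2 k != 0.
  by move=> k; apply/eqP => h; have := cd2 k; rewrite h mul0r => /eqP; rewrite eq_sym oner_eq0.
pose D1 := Ser ipZ ez c1; pose D2 := Ser ipW ew c2.
pose K := Kser ipZ ipW ez c1 v.
pose TX (p : Z * W) : Z * W := (Tz (D1 p.1), K p.1 + Tw (D2 p.2)).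
pose eX (i : nat + nat) : Z * W := match i with inl j => (ez j, 0) | inr k => (0, ew k) end.
have lTz := proj1 hTz; have lTw := proj1 hTw.
have hTX : bounded_linear_endo X TX.
  split.
    move=> a [p1 p2] [q1 q2]; rewrite /TX /=.
    rewrite /D1 /D2 /K (Ser_lin hZ hez hc1) (Ser_lin hW hew hc2) (Kser_lin hZ hW hez hc1 hv2).
    rewrite lTz lTw.
    have -> : forall (x1 y1 : Z) (x2 y2 : W),
      a *: ((x1, x2) : Z * W) + (y1, y2) = (a *: x1 + y1, a *: x2 + y2) by [].
    congr (_, _); rewrite scalerDr addrACA //.
  have [_ [MTz hMTz]] := hTz; have [_ [MTw hMTw]] := hTw.
  have [Kc hKc] := Kser_bound hZ hW hez hc1 hv2.
  set s1 := Num.sqrt (Cz ^+ 2); set s2 := Num.sqrt (Cw ^+ 2).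
  exists (`|MTz| * s1 + `|Kc| + `|MTw| * s2) => [[a b]].
  rewrite /TX /=.
  apply: le_trans (hnX_ub hipZ hipW _ _) _.
  have h1 : hn ipZ (Tz (D1 a)) <= `|MTz| * s1 * hn ipZ a.
    apply: le_trans (bound_abs hMTz _) _; rewrite -mulrA ler_wpM2l //.
    exact: (Ser_bound hZ hez hc1).
  have h2 : hn ipW (Tw (D2 b)) <= `|MTw| * s2 * hn ipW b.
    apply: le_trans (bound_abs hMTw _) _; rewrite -mulrA ler_wpM2l //.
    exact: (Ser_bound hW hew hc2).
  have h3 : hn ipW (K a) <= `|Kc| * hn ipZ a by apply: (bound_abs hKc).
  have h4 := hnD hipW (K a) (Tw (D2 b)).
  have ha := hnX_le1 hipZ hipW a b; have hb := hnX_le2 hipZ hipW a b.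
  have p1 : 0 <= `|MTz| * s1 by rewrite mulr_ge0 ?sqrtr_ge0.
  have p2 : 0 <= `|MTw| * s2 by rewrite mulr_ge0 ?sqrtr_ge0.
  have p3 : 0 <= `|Kc| by [].
  have := hn_ge0 ipZ a; have := hn_ge0 ipW b.
  rewrite -/X in ha hb *.
  nra.
exists eX, TX; split => //.
- split.
    case=> [j|k]; rewrite /eX /prod_ip /=.
      by rewrite (ee hez) (ip0l hipW) addr0.
    by rewrite (ee hew) (ip0l hipZ) add0r.
  split.
    case=> [j|k] [j'|k'] h; rewrite /eX /prod_ip /=.
    - by rewrite (eij hez) ?(ip0l hipW) ?addr0 // => e; apply: h; rewrite e.
    - by rewrite (ip0r hipZ) (ip0l hipW) addr0.
    - by rewrite (ip0l hipZ) (ip0r hipW) addr0.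
    - by rewrite (eij hew) ?(ip0l hipZ) ?add0r // => e; apply: h; rewrite e.
  case=> a b h.
  have ha : a = 0.
    apply: (onb_complete hez) => j; have := h (inl j).
    by rewrite /eX /prod_ip /= (ip0r hipW) addr0.
  have hb : b = 0.
    apply: (onb_complete hew) => k; have := h (inr k).
    by rewrite /eX /prod_ip /= (ip0r hipZ) add0r.
  by rewrite ha hb.
- apply: (bij_of 0).
    move=> p q hpq; apply/eqP; rewrite -subr_eq0; apply/eqP.
    have : TX (p - q) = 0 by rewrite (TB hTX) hpq subrr.
    case: (p - q) => a b; rewrite /TX /= => e.
    have e1 : Tz (D1 a) = 0 by move: e => [].
    have e1' : D1 a = 0 by apply: (bij_inj hTzb); rewrite e1 (T0 hTz).
    have ha : a = 0 by apply: (Ser_inj hZ hez hc1 c1n).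
    have e2 : Tw (D2 b) = 0.
      by move: e => [_]; rewrite ha /K (Kser0 hZ hW hez hc1 hv2) add0r.
    have e2' : D2 b = 0 by apply: (bij_inj hTwb); rewrite e2 (T0 hTw).
    have hb : b = 0 by apply: (Ser_inj hW hew hc2 c2n).
    by rewrite ha hb.
  case: hTzb => Sz TzS SzT; case: hTwb => Sw TwS SwT.
  case=> p q.
  pose a := Ser ipZ ez d1 (Sz p).
  pose b := Ser ipW ew d2 (Sw (q - K a)).
  exists (a, b); rewrite /TX /= /D1 /D2 /a /b.
  rewrite (Ser_inv hZ hez _ hc1 hd1 cd1) (Ser_inv hW hew _ hc2 hd2 cd2) SzT SwT.
  by rewrite addrC subrK.
- case=> [j|k]; rewrite /TX /eX /=.
    rewrite /D1 /D2 /K (Ser_e hZ hez hc1) (TZ hTz) -ezq (Kser_e hZ hW hez hc1 hv2).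
    by rewrite (Ser0 hW hew hc2) (T0 hTw) addr0.
  rewrite /D1 /D2 /K (Ser_e hW hew hc2) (TZ hTw) -ewq (Kser0 hZ hW hez hc1 hv2).
  rewrite (Ser0 hZ hez hc1) (T0 hTz) add0r /normalize.
  have -> : forall (c : R[i]) (x : Z) (y : W), c *: ((x, y) : Z * W) = (c *: x, c *: y) by [].
  by rewrite scaler0.
Qed.
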